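(* Let $M^2$ be a surface in $\mathbb{R}^4$ free of flat points. Then $M^2$ is minimal (its mean curvature vector field $H$ vanishes identically) if and only if at each point of $M^2$ the tangent indicatrix $\chi$ is a circle, i.e. the two principal normal curvatures satisfy $\nu'=\nu''$.
   Context: Let $M^2: z=z(u,v)$ be a regular surface in $\mathbb{R}^4$ with first fundamental form $I=E\,du^2+2F\,du\,dv+G\,dv^2$, $W=\sqrt{EG-F^2}$. Choose an orthonormal normal frame $\{e_1,e_2\}$ with $\{z_u,z_v,e_1,e_2\}$ positively oriented, write $\sigma(z_u,z_u)=c_{11}^1e_1+c_{11}^2e_2$, $\sigma(z_u,z_v)=c_{12}^1e_1+c_{12}^2e_2$, $\sigma(z_v,z_v)=c_{22}^1e_1+c_{22}^2e_2$ ($\sigma$ the second fundamental form), and set $L=\frac{2}{W}(c_{11}^1c_{12}^2-c_{12}^1c_{11}^2)$, $M=\frac{1}{W}(c_{11}^1c_{22}^2-c_{22}^1c_{11}^2)$, $N=\frac{2}{W}(c_{12}^1c_{22}^2-c_{22}^1c_{12}^2)$. The quadratic form $II(\lambda,\mu)=L\lambda^2+2M\lambda\mu+N\mu^2$ on tangent vectors $\lambda z_u+\mu z_v$ is the (invariant) second fundamental form. A point is flat if $L=M=N=0$; ''free of flat points'' means $(L,M,N)\ne(0,0,0)$ everywhere. At each point, the principal normal curvatures $\nu',\nu''$ are the two roots of $(EG-F^2)\nu^2-(EN+GL-2FM)\nu+(LN-M^2)=0$ (the eigenvalues of $II$ relative to $I$), and the principal directions are the corresponding $I$-orthogonal eigendirections.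 The tangent indicatrix $\chi$ at $p$ is the conic in $T_pM^2$ given, in Cartesian coordinates $(X,Y)$ with respect to an orthonormal basis of principal directions, by $\nu'X^2+\nu''Y^2=\varepsilon$, $\varepsilon=\pm1$. *)

(* Defs.v *)
From HB Require Import structures.
From mathcomp Require Import all_boot all_order all_algebra.
From mathcomp Require Import all_classical all_reals all_analysis.
Set Implicit Arguments. Unset Strict Implicit. Unset Printing Implicit Defensive.
Import Order.TTheory GRing.Theory Num.Theory.
Import numFieldNormedType.Exports.
Local Open Scope classical_set_scope.
Local Open Scope ring_scope.

Section SurfaceR4.
Variable R : realType.

Notation R4 := 'rV[R]_4.

Definition dot4 (a b : R4) : R := \sum_(i < 4) a ord0 i * b ord0 i.

Definition pu (z : R -> R -> R4) : R -> R -> R4 :=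
  fun u v => derive1 (fun s => z s v) u.
Definition pv (z : R -> R -> R4) : R -> R -> R4 :=
  fun u v => derive1 (fun t => z u t) v.

Definition twice_partially_derivable (z : R -> R -> R4) (u v : R) : Prop :=
  [/\ derivable (fun s => z s v) u 1, derivable (fun t => z u t) v 1,
      derivable (fun s => pu z s v) u 1, derivable (fun t => pu z u t) v 1
    & derivable (fun t => pv z u t) v 1].

Definition regular_at (z : R -> R -> R4) (u v : R) : Prop :=
  \rank (col_mx (pu z u v) (pv z u v)) = 2%N.

Definition Ecoef z u v := dot4 (pu z u v) (pu z u v).
Definition Fcoef z u v := dot4 (pu z u v) (pv z u v).
Definition Gcoef z u v := dot4 (pv z u v) (pv z u v).
Definition Wcoef z u v := Num.sqrt (Ecoef z u v * Gcoef z u v - Fcoef z u v ^+ 2).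

Definition rows4 (a b c d : R4) : 'M[R]_4 :=
  \matrix_(i < 4, j < 4) (nth 0 [:: a; b; c; d] i) ord0 j.

Definition normal_frame_at (z : R -> R -> R4) (e1 e2 : R -> R -> R4) (u v : R) : Prop :=
  [/\ dot4 (e1 u v) (e1 u v) = 1, dot4 (e2 u v) (e2 u v) = 1,
      dot4 (e1 u v) (e2 u v) = 0,
      [/\ dot4 (e1 u v) (pu z u v) = 0, dot4 (e1 u v) (pv z u v) = 0,
          dot4 (e2 u v) (pu z u v) = 0 & dot4 (e2 u v) (pv z u v) = 0]
    & 0 < \det (rows4 (pu z u v) (pv z u v) (e1 u v) (e2 u v))].

Definition zuu z := pu (pu z).
Definition zuv z := pv (pu z).
Definition zvv z := pv (pv z).

(* coefficients of the second fundamental form sigma in the frame: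
   sigma(z_u,z_u) = c11^1 e1 + c11^2 e2 is the normal part of z_uu, etc. *)
Definition c11 z (e : R -> R -> R4) u v := dot4 (zuu z u v) (e u v).
Definition c12 z (e : R -> R -> R4) u v := dot4 (zuv z u v) (e u v).
Definition c22 z (e : R -> R -> R4) u v := dot4 (zvv z u v) (e u v).

Definition sigma11 z e1 e2 u v : R4 := c11 z e1 u v *: e1 u v + c11 z e2 u v *: e2 u v.
Definition sigma12 z e1 e2 u v : R4 := c12 z e1 u v *: e1 u v + c12 z e2 u v *: e2 u v.
Definition sigma22 z e1 e2 u v : R4 := c22 z e1 u v *: e1 u v + c22 z e2 u v *: e2 u v.

(* mean curvature vector H = (1/2) tr_I sigma *)
Definition Hvec z e1 e2 u v : R4 :=
  (2 * (Ecoef z u v * Gcoef z u v - Fcoef z u v ^+ 2))^-1 *: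
    (Gcoef z u v *: sigma11 z e1 e2 u v - (2 * Fcoef z u v) *: sigma12 z e1 e2 u v
     + Ecoef z u v *: sigma22 z e1 e2 u v).

Definition Lcoef z e1 e2 u v :=
  2 / Wcoef z u v * (c11 z e1 u v * c12 z e2 u v - c12 z e1 u v * c11 z e2 u v).
Definition Mcoef z e1 e2 u v :=
  1 / Wcoef z u v * (c11 z e1 u v * c22 z e2 u v - c22 z e1 u v * c11 z e2 u v).
Definition Ncoef z e1 e2 u v :=
  2 / Wcoef z u v * (c12 z e1 u v * c22 z e2 u v - c22 z e1 u v * c12 z e2 u v).

Definition flat_point z e1 e2 u v : Prop :=
  [/\ Lcoef z e1 e2 u v = 0, Mcoef z e1 e2 u v = 0 & Ncoef z e1 e2 u v = 0].

(* principal normal curvatures: the two roots of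
   (EG-F^2) nu^2 - (EN+GL-2FM) nu + (LN-M^2) = 0 *)
Definition qa z u v := Ecoef z u v * Gcoef z u v - Fcoef z u v ^+ 2.
Definition qb z e1 e2 u v :=
  Ecoef z u v * Ncoef z e1 e2 u v + Gcoef z u v * Lcoef z e1 e2 u v
  - 2 * Fcoef z u v * Mcoef z e1 e2 u v.
Definition qc z e1 e2 u v :=
  Lcoef z e1 e2 u v * Ncoef z e1 e2 u v - Mcoef z e1 e2 u v ^+ 2.
Definition qdisc z e1 e2 u v :=
  qb z e1 e2 u v ^+ 2 - 4 * qa z u v * qc z e1 e2 u v.

Definition nu1 z e1 e2 u v :=
  (qb z e1 e2 u v + Num.sqrt (qdisc z e1 e2 u v)) / (2 * qa z u v).
Definition nu2 z e1 e2 u v :=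
  (qb z e1 e2 u v - Num.sqrt (qdisc z e1 e2 u v)) / (2 * qa z u v).

End SurfaceR4.

(* Main.v *)
Require Import Defs.
From HB Require Import structures.
From mathcomp Require Import all_boot all_order all_algebra.
From mathcomp Require Import all_classical all_reals all_analysis.
From mathcomp Require Import ring lra.
Import Order.TTheory GRing.Theory Num.Theory.
Import numFieldNormedType.Exports.
Local Open Scope classical_set_scope.
Local Open Scope ring_scope.
Lemma alg (R : realType) (E F G a1 a2 a3 b1 b2 b3 W L M N : R) :
 W = Num.sqrt (E*G - F^+2) ->
 L = 2/W*(a1*b2 - a2*b1) -> M = 1/W*(a1*b3 - a3*b1) -> N = 2/W*(a2*b3-a3*b2) ->
 0 <= E -> ~ [/\ L = 0, M = 0 & N = 0] ->
 ((G*a1 - 2*F*a2 + E*a3 = 0 /\ G*b1 - 2*F*b2 + E*b3 = 0) <->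
  ((E* N + G* L - 2*F* M) + Num.sqrt ((E* N + G* L - 2*F* M)^+2 - 4*(E*G - F^+2)*(L* N - M^+2)))
     / (2*(E*G - F^+2)) =
  ((E* N + G* L - 2*F* M) - Num.sqrt ((E* N + G* L - 2*F* M)^+2 - 4*(E*G - F^+2)*(L* N - M^+2)))
     / (2*(E*G - F^+2))).
Proof.
move=> hW hL hM hN hE nfl.
set q := E*G - F^+2.
set d := (E* N + G* L - 2*F* M)^+2 - 4*q*(L* N - M^+2).
have W0 : W != 0.
  apply/eqP => W0; apply: nfl; rewrite hL hM hN W0 invr0 !mulr0 !mul0r; by [].
have qpos : 0 < q.
  rewrite ltNge; apply/negP => hq; move: W0; rewrite hW -/q.
  have -> : Num.sqrt q = 0 by apply/eqP; rewrite sqrtr_eq0.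
  by rewrite eqxx.
have Epos : 0 < E.
  rewrite lt0r hE andbT; apply/eqP => E0; move: qpos; rewrite /q E0 mul0r.
  move=> h; have : 0 <= F^+2 by exact: sqr_ge0. lra.
have q0 : q != 0 by rewrite gt_eqF.
have E0 : E != 0 by rewrite gt_eqF.
set l := a1*b2 - a2*b1. set m := a1*b3 - a3*b1. set n := a2*b3-a3*b2.
set al := E* M - F* L. set be := E* N - G* L.
have iden : E^+2 * d = (E*be - 2*F*al)^+2 + 4*q*al^+2 by rewrite /d /al /be /q; ring.
have halW : W * al = E* m - 2*F* l by rewrite /al hM hL /m /l; field.
have hbeW : W * be = 2*(E* n - G* l) by rewrite /be hN hL /n /l; field.
have hgaW : W * (F* N - G* M) = 2*F* n - G* m by rewrite hN hM /n /m; field.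
split.
- move=> [hX hY].
  have m1 : E* m - 2*F* l = a1*(G*b1 - 2*F*b2 + E*b3) - b1*(G*a1 - 2*F*a2 + E*a3)
    by rewrite /m /l; ring.
  have m2 : E* n - G* l = a2*(G*b1 - 2*F*b2 + E*b3) - b2*(G*a1 - 2*F*a2 + E*a3)
    by rewrite /n /l; ring.
  rewrite hX hY !mulr0 subr0 in m1 m2.
  have al0 : al = 0.
    by apply/eqP; move: halW; rewrite m1 => /eqP; rewrite mulf_eq0 (negbTE W0).
  have be0 : be = 0.
    by apply/eqP; move: hbeW; rewrite m2 mulr0 => /eqP; rewrite mulf_eq0 (negbTE W0).
  have d0 : d = 0.
    apply/eqP; move: iden; rewrite al0 be0 => /eqP.
    by rewrite !(mulr0, expr0n, subr0, addr0) /= mulf_eq0 expf_eq0 /= (negbTE E0).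
  by rewrite d0 sqrtr0 addr0 subr0.
- move=> heq.
  have s0 : Num.sqrt d = 0.
    have : (E* N + G* L - 2*F* M + Num.sqrt d) / (2*q) - (E* N + G* L - 2*F* M - Num.sqrt d) / (2*q) = 0
      by rewrite heq subrr.
    have -> : (E* N + G* L - 2*F* M + Num.sqrt d) / (2*q) - (E* N + G* L - 2*F* M - Num.sqrt d) / (2*q)
       = Num.sqrt d / q by field.
    by move/eqP; rewrite mulf_eq0 invr_eq0 (negbTE q0) orbF => /eqP.
  have dle : d <= 0 by rewrite -sqrtr_eq0 s0.
  have h1 : 0 <= (E*be - 2*F*al)^+2 by exact: sqr_ge0.
  have h2 : 0 <= al^+2 by exact: sqr_ge0.
  have h3 : 0 <= E^+2 by exact: sqr_ge0.
  have h4 : E^+2 * d <= 0 by rewrite mulr_ge0_le0.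
  have t2 : 4*q*al^+2 = 0 by nra.
  have t1 : (E*be - 2*F*al)^+2 = 0 by nra.
  have al0 : al = 0 by apply/eqP; rewrite -sqrf_eq0; nra.
  move/eqP: t1; rewrite expf_eq0 /= al0 mulr0 subr0 mulf_eq0 (negbTE E0) /= => /eqP be0.
  have ga0 : F* N - G* M = 0.
    have : E * (F* N - G* M) = F*be - G*al by rewrite /be /al; ring.
    rewrite al0 be0 !mulr0 subr0 => /eqP; by rewrite mulf_eq0 (negbTE E0) => /eqP.
  have mu1 : E* m - 2*F* l = 0 by rewrite -halW al0 mulr0.
  have mu2 : E* n - G* l = 0.
    have : 2*(E* n - G* l) = 0 by rewrite -hbeW be0 mulr0.
    by move/eqP; rewrite mulf_eq0 pnatr_eq0 /= => /eqP.
  have mu3 : 2*F* n - G* m = 0 by rewrite -hgaW ga0 mulr0.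
  set X := G*a1 - 2*F*a2 + E*a3. set Y := G*b1 - 2*F*b2 + E*b3.
  have xl : X* l = a2*(E* m - 2*F* l) - a1*(E* n - G* l) by rewrite /X /l /m /n; ring.
  have xm : X* m = a3*(E* m - 2*F* l) - a1*(2*F* n - G* m) by rewrite /X /l /m /n; ring.
  have xn : X* n = a3*(E* n - G* l) - a2*(2*F* n - G* m) by rewrite /X /l /m /n; ring.
  have yl : Y* l = b2*(E* m - 2*F* l) - b1*(E* n - G* l) by rewrite /Y /l /m /n; ring.
  have ym : Y* m = b3*(E* m - 2*F* l) - b1*(2*F* n - G* m) by rewrite /Y /l /m /n; ring.
  have yn : Y* n = b3*(E* n - G* l) - b2*(2*F* n - G* m) by rewrite /Y /l /m /n; ring.
  rewrite mu1 mu2 mu3 !mulr0 subr0 in xl xm xn yl ym yn.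
  have flat : forall T, T* l = 0 -> T* m = 0 -> T* n = 0 -> T = 0.
    move=> T hl hm hn; apply/eqP/negPn/negP => T0; apply: nfl.
    move/eqP: hl; rewrite mulf_eq0 (negbTE T0) /= => /eqP l0.
    move/eqP: hm; rewrite mulf_eq0 (negbTE T0) /= => /eqP m0.
    move/eqP: hn; rewrite mulf_eq0 (negbTE T0) /= => /eqP n0.
    by rewrite hL hM hN -/l -/m -/n l0 m0 n0 !mulr0.
  by split; apply: flat.
Qed.


Lemma dot4_exp (R : realType) (a b : 'rV[R]_4) :
  dot4 a b = a ord0 0 * b ord0 0 + a ord0 1 * b ord0 1 + a ord0 2 * b ord0 2 + a ord0 3 * b ord0 3.
Proof.
rewrite /dot4 !big_ord_recr big_ord0 /= add0r.
by congr (_ + _ + _ + _); congr (_ * _); congr (_ _ _); apply: val_inj.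
Qed.

Lemma dot4_ge0 (R : realType) (a : 'rV[R]_4) : 0 <= dot4 a a.
Proof. rewrite /dot4; apply: sumr_ge0 => i _; by rewrite -expr2 sqr_ge0. Qed.

Lemma dot4_lin (R : realType) (x y : R) (a b c : 'rV[R]_4) :
  dot4 (x *: a + y *: b) c = x * dot4 a c + y * dot4 b c.
Proof. rewrite !dot4_exp !mxE; ring. Qed.

Lemma dot4C (R : realType) (a b : 'rV[R]_4) : dot4 a b = dot4 b a.
Proof. rewrite !dot4_exp; ring. Qed.

Lemma Hexp (R : realType) (k E F G a1 a2 a3 b1 b2 b3 : R) (e1 e2 : 'rV[R]_4) :
  k *: (G *: (a1*:e1 + b1*:e2) - (2*F) *: (a2*:e1+b2*:e2) + E*:(a3*:e1+b3*:e2))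
  = k *: ((G*a1 - 2*F*a2 + E*a3) *: e1 + (G*b1 - 2*F*b2+E*b3) *: e2).
Proof. apply/rowP => j; rewrite !mxE; ring. Qed.

Lemma dot4_0l (R : realType) (a : 'rV[R]_4) : dot4 0 a = 0.
Proof. rewrite dot4_exp !mxE; ring. Qed.

Lemma point (R : realType) (z e1 e2 : R -> R -> 'rV[R]_4) u v :
  normal_frame_at z e1 e2 u v -> ~ flat_point z e1 e2 u v ->
  (Hvec z e1 e2 u v = 0 <-> nu1 z e1 e2 u v = nu2 z e1 e2 u v).
Proof.
move=> [h11 h22 h12 _ _] nfl.
set E := Ecoef z u v; set F := Fcoef z u v; set G := Gcoef z u v.
set a1 := c11 z e1 u v; set a2 := c12 z e1 u v; set a3 := c22 z e1 u v.
set b1 := c11 z e2 u v; set b2 := c12 z e2 u v; set b3 := c22 z e2 u v.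
have := @alg R E F G a1 a2 a3 b1 b2 b3 (Wcoef z u v) (Lcoef z e1 e2 u v)
  (Mcoef z e1 e2 u v) (Ncoef z e1 e2 u v) erefl erefl erefl erefl (@dot4_ge0 R (pu z u v)).
move=> /(_ nfl) key.
rewrite /nu1 /nu2 /qb /qdisc /qa /qc -/E -/F -/G -key.
set X := G*a1 - 2*F*a2 + E*a3. set Y := G*b1 - 2*F*b2 + E*b3.
have HE : Hvec z e1 e2 u v = (2 * (E*G - F^+2))^-1 *: (X *: e1 u v + Y *: e2 u v).
  exact: Hexp.
rewrite HE; split.
- move=> H0.
  have k0 : (2 * (E*G - F^+2))^-1 != 0.
    rewrite invr_eq0 mulf_eq0 pnatr_eq0 /=; apply/eqP => q0; apply: nfl.
    have W0 : Wcoef z u v = 0 by change (Num.sqrt (E*G - F^+2) = 0); rewrite q0 sqrtr0.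
    have Z : forall w x y : R, w = 0 -> x / w * y = 0 by move=> w x y ->; rewrite invr0 mulr0 mul0r.
    by split; apply: Z; exact: W0.
  move: H0 => /eqP; rewrite scaler_eq0 (negbTE k0) orFb => /eqP H0.
  have d1 : dot4 (X *: e1 u v + Y *: e2 u v) (e1 u v) = 0 by rewrite H0 dot4_0l.
  have d2 : dot4 (X *: e1 u v + Y *: e2 u v) (e2 u v) = 0 by rewrite H0 dot4_0l.
  rewrite !dot4_lin (@dot4C R (e2 u v)) h11 h22 h12 in d1 d2.
  by split; [move: d1 | move: d2]; rewrite !(mulr1, mulr0, addr0, add0r).
- by move=> [-> ->]; rewrite !scale0r addr0 scaler0.
Qed.

Theorem proposition3p3 (R : realType) (D : set (R * R)) (z e1 e2 : R -> R -> 'rV[R]_4) :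
  open D ->
  (forall p, D p -> twice_partially_derivable z p.1 p.2) ->
  (forall p, D p -> regular_at z p.1 p.2) ->
  (forall p, D p -> normal_frame_at z e1 e2 p.1 p.2) ->
  (forall p, D p -> ~ flat_point z e1 e2 p.1 p.2) ->
  ((forall p, D p -> Hvec z e1 e2 p.1 p.2 = 0) <->
   (forall p, D p -> nu1 z e1 e2 p.1 p.2 = nu2 z e1 e2 p.1 p.2)).
Proof.
move=> _ _ _ hf hnf; split=> h p Dp.
- by apply: (proj1 (@point R z e1 e2 p.1 p.2 (hf p Dp) (hnf p Dp))); exact: h.
- by apply: (proj2 (@point R z e1 e2 p.1 p.2 (hf p Dp) (hnf p Dp))); exact: h.
Qed.
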